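(* Let $k\in\mathbb N_0$, $0\le\lambda\le k$ with $\lambda$ even, and $n\in\mathbb Z$. (1) If $\lambda\ge2$ and $n<\frac\lambda2$, the multiplicity of the trivial $\mathfrak{sl}_2$-module in the conformal weight space $L(k,\lambda)_{h_\lambda+n}$ is $0$. (2) For $\lambda\ge0$, the multiplicity of the trivial $\mathfrak{sl}_2$-module in $L(k,\lambda)_{h_\lambda+\lambda/2}$ is $1$.
   Context: $L(k,0)$ is the simple affine vertex operator algebra of $\mathfrak{sl}_2$ at level $k$, with Chevalley basis $e,h,f$ and affine modes $x_n$; $L(k,\lambda)$, $0\le\lambda\le k$, is the simple module generated by a highest weight vector of $h_0$-eigenvalue $\lambda$ and conformal weight $h_\lambda=\lambda(\lambda+2)/(4(k+2))$; $L(k,\lambda)_m$ is the $L_0$-eigenspace of eigenvalue $m$, which is a finite-dimensional $\mathfrak{sl}_2$-module via the zero modes $e_0,h_0,f_0$. *)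

(* Defs.v *)
From HB Require Import structures.
From mathcomp Require Import all_boot all_order all_algebra.
Set Implicit Arguments. Unset Strict Implicit. Unset Printing Implicit Defensive.
Import Order.TTheory GRing.Theory Num.Theory.
Local Open Scope ring_scope.

Section AffSl2.
Variables (F : numClosedFieldType) (V : lmodType F).

Definition comm (A B : V -> V) (w : V) : V := A (B w) - B (A w).

Definition delta0 (m n : int) : F := if m + n == 0 then 1 else 0.

(* Relations of the affine Lie algebra sl_2^ with the central element acting as
   the scalar [lev], for the normalized form (e,f) = 1, (h,h) = 2:
   [h_m,h_n] = 2 m d_{m+n,0} K, [h_m,e_n] = 2 e_{m+n}, [h_m,f_n] = -2 f_{m+n},
   [e_m,f_n] = h_{m+n} + m d_{m+n,0} K, [e_m,e_n] = [f_m,f_n] = 0. *)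
Definition affine_sl2_action (lev : F) (E H Fo : int -> {linear V -> V}) : Prop :=
  forall (m n : int) (w : V),
  [/\ comm (H m) (H n) w = (2 * m%:~R * delta0 m n * lev) *: w,
      comm (H m) (E n) w = 2%:R *: E (m + n) w,
      comm (H m) (Fo n) w = - (2%:R *: Fo (m + n) w)
    & [/\ comm (E m) (Fo n) w = H (m + n) w + (m%:~R * delta0 m n * lev) *: w,
      comm (E m) (E n) w = 0
    & comm (Fo m) (Fo n) w = 0]].

Definition submodule (E H Fo : int -> {linear V -> V}) (S : V -> Prop) : Prop :=
  [/\ S 0, (forall x y, S x -> S y -> S (x + y)),
      (forall (c : F) x, S x -> S (c *: x))
    & (forall (n : int) x, S x -> [/\ S (E n x), S (H n x) & S (Fo n x)])].

Definition simple_module (E H Fo : int -> {linear V -> V}) : Prop :=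
  forall S : V -> Prop, submodule E H Fo S ->
    (exists2 x, x != 0 & S x) -> forall y, S y.

Definition hw (k lam : nat) : F := (lam * (lam + 2))%:R / (4 * (k + 2))%:R.

(* (V; E,H,Fo; L0; v) is the simple highest weight module L(k,lam), with
   v its highest weight vector and L0 the Virasoro zero mode
   ([L_0, x_n] = -n x_n, L_0 v = h_lam v). *)
Definition is_L (k lam : nat) (E H Fo : int -> {linear V -> V})
    (L0 : {linear V -> V}) (v : V) : Prop :=
  [/\ affine_sl2_action k%:R E H Fo,
      simple_module E H Fo,
      [/\ v != 0, (forall n : int, 0 < n -> [/\ E n v = 0, H n v = 0 & Fo n v = 0]),
          E 0 v = 0 & H 0 v = lam%:R *: v],
      (forall (n : int) (w : V),
          [/\ comm L0 (E n) w = - (n%:~R *: E n w),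
              comm L0 (H n) w = - (n%:~R *: H n w)
            & comm L0 (Fo n) w = - (n%:~R *: Fo n w)])
    & L0 v = hw k lam *: v].

(* w lies in the conformal weight space L_{h_lam + n} and is invariant under
   the zero-mode sl_2 (i.e. spans a trivial sl_2-submodule). The multiplicity
   of the trivial sl_2-module in L_{h_lam+n} is the dimension of the space of
   such w. *)
Definition triv_in_weight (k lam : nat) (E H Fo : int -> {linear V -> V})
    (L0 : {linear V -> V}) (n : int) (w : V) : Prop :=
  [/\ L0 w = (hw k lam + n%:~R) *: w, E 0 w = 0, H 0 w = 0 & Fo 0 w = 0].

End AffSl2.

(* Main.v *)
Require Import Defs.
From HB Require Import structures.
From mathcomp Require Import all_boot all_order all_algebra.
From mathcomp Require Import ring zify.
Set Implicit Arguments. Unset Strict Implicit. Unset Printing Implicit Defensive.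
Import Order.TTheory GRing.Theory Num.Theory.
Local Open Scope ring_scope.

Inductive kind := KE | KH | KF.
Definition letter := (kind * int)%type.

Section FD.
Variable R : comNzRingType.

Lemma MD : forall (N i : nat), (i < N)%N ->
  \sum_(t < N.+1) (-1) ^+ t * 'C(N, t)%:R * (t%:R : R) ^+ i = 0.
Proof.
elim=> [|N IH] i // hi.
case: i hi => [|i] hi.
  have := exprDn (1 : R) (-1) N.+1; rewrite addrN expr0n /= => /esym.
  move=> h; rewrite -[RHS]h; apply: eq_bigr => t _.
  by rewrite expr1n mul1r expr0 mulr1 mulr_natr.
rewrite big_ord_recl /= expr0n /= mulr0 add0r.
transitivity (- (N.+1%:R) * \sum_(r < i.+1) 'C(i,r)%:R *
   \sum_(s < N.+1) (-1)^+s * 'C(N,s)%:R * ((s%:R : R) ^+ (i - r))); last first.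
  rewrite big1 ?mulr0 // => r _; rewrite IH ?mulr0 //; lia.
under [in RHS]eq_bigr do rewrite mulr_sumr.
rewrite exchange_big /= mulr_sumr; apply: eq_bigr => s _.
rewrite /bump /= add1n.
have E1 : \sum_(r < i.+1) 'C(i, r)%:R * ((-1) ^+ s * 'C(N, s)%:R * (s%:R : R) ^+ (i - r))
   = (-1)^+s * 'C(N,s)%:R * (s.+1%:R)^+i.
  rewrite -natr1 exprDn mulr_sumr; apply: eq_bigr => r _.
  by rewrite expr1n mulr1 mulr_natr; ring.
rewrite E1.
have hb' : ('C(N.+1, s.+1)%:R * s.+1%:R : R) = N.+1%:R * 'C(N,s)%:R.
  by rewrite -!natrM mulnC -mul_bin_diag.
transitivity (- ((-1)^+s * ('C(N.+1,s.+1)%:R * s.+1%:R) * ((s.+1%:R : R))^+i)).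
  by rewrite !exprS; ring.
by rewrite hb'; ring.
Qed.

Lemma FDp (N : nat) (p : {poly R}) : (size p <= N)%N ->
  \sum_(t < N.+1) (-1) ^+ t * 'C(N, t)%:R * p.[t%:R] = 0.
Proof.
move=> hp.
rewrite (eq_bigr (fun t : 'I_N.+1 => \sum_(i < size p) (-1)^+t * 'C(N,t)%:R * (p`_i * (t%:R)^+i))); last first.
  by move=> t _; rewrite horner_coef mulr_sumr.
rewrite exchange_big /= big1 // => i _.
transitivity (p`_i * \sum_(t < N.+1) (-1) ^+ t * 'C(N, t)%:R * (t%:R : R) ^+ i).
  by rewrite mulr_sumr; apply: eq_bigr => t _; ring.
by rewrite MD ?mulr0 //; apply: leq_trans hp.
Qed.
End FD.

Section Main.
Variables (F : numClosedFieldType) (V : lmodType F).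
Variables (k lam : nat) (E H Fo : int -> {linear V -> V}) (L0 : {linear V -> V}) (v : V).
Hypothesis HL : is_L k lam E H Fo L0 v.

Definition hwF : F := hw F k lam.

Lemma aff : affine_sl2_action k%:R E H Fo.
Proof. by case: HL. Qed.

Lemma comm_eq (A B : V -> V) w c : comm A B w = c -> A (B w) = B (A w) + c.
Proof. by rewrite /comm => <-; rewrite addrC subrK. Qed.
Lemma comm_eqN (A B : V -> V) w c : comm B A w = c -> A (B w) = B (A w) - c.
Proof. by rewrite /comm => <-; rewrite opprB addrC subrK. Qed.

Lemma rHH m n w : H m (H n w) = H n (H m w) + (2 * m%:~R * delta0 F m n * k%:R) *: w.
Proof. by apply: comm_eq; case: (aff m n w). Qed.
Lemma rHE m n w : H m (E n w) = E n (H m w) + 2%:R *: E (m + n) w.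
Proof. by apply: comm_eq; case: (aff m n w). Qed.
Lemma rHF m n w : H m (Fo n w) = Fo n (H m w) - 2%:R *: Fo (m + n) w.
Proof. by apply: comm_eq; case: (aff m n w). Qed.
Lemma rEF m n w : E m (Fo n w) = Fo n (E m w) + (H (m + n) w + (m%:~R * delta0 F m n * k%:R) *: w).
Proof. by apply: comm_eq; case: (aff m n w) => _ _ _ []. Qed.
Lemma rEE m n w : E m (E n w) = E n (E m w).
Proof. by rewrite (@comm_eq _ _ _ 0) ?addr0 //; case: (aff m n w) => _ _ _ []. Qed.
Lemma rFF m n w : Fo m (Fo n w) = Fo n (Fo m w).
Proof. by rewrite (@comm_eq _ _ _ 0) ?addr0 //; case: (aff m n w) => _ _ _ []. Qed.
Lemma rEH m n w : E m (H n w) = H n (E m w) - 2%:R *: E (n + m) w.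
Proof. by apply: comm_eqN; case: (aff n m w). Qed.
Lemma rFH m n w : Fo m (H n w) = H n (Fo m w) + 2%:R *: Fo (n + m) w.
Proof. by rewrite (comm_eqN (c := - (2%:R *: Fo (n + m) w))) ?opprK //; case: (aff n m w). Qed.
Lemma rFE m n w : Fo m (E n w) = E n (Fo m w) - (H (n + m) w + (n%:~R * delta0 F n m * k%:R) *: w).
Proof. by apply: comm_eqN; case: (aff n m w) => _ _ _ []. Qed.

Lemma rL0 (X : int -> {linear V -> V}) : (X = E \/ X = H \/ X = Fo) ->
  forall n w, L0 (X n w) = X n (L0 w) - n%:~R *: X n w.
Proof.
move=> hX n w; case: HL => _ _ _ /(_ n w) [h1 h2 h3] _.
by case: hX => [->|[->|->]]; apply: comm_eq.
Qed.


Definition op (l : letter) : {linear V -> V} :=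
  match l.1 with KE => E l.2 | KH => H l.2 | KF => Fo l.2 end.
Definition act (M : seq letter) (u : V) : V := foldr (fun l x => op l x) u M.
Definition wtk (c : kind) : int := match c with KE => 2 | KH => 0 | KF => -2 end.
Definition deg (M : seq letter) : int := \sum_(l <- M) - l.2.
Definition wt (M : seq letter) : int := \sum_(l <- M) wtk l.1.
Definition allowed (l : letter) : bool :=
  match l.1 with KE => l.2 < 0 | _ => l.2 <= 0 end.

Lemma L0_op l w : L0 (op l w) = op l (L0 w) - l.2%:~R *: op l w.
Proof.
by case: l => [[] n]; rewrite /op /=; apply: rL0; [left|right;left|right;right].
Qed.

Lemma H0_op l w : H 0 (op l w) = op l (H 0 w) + (wtk l.1)%:~R *: op l w.
Proof.
case: l => [[] n]; rewrite /op /=.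
- by rewrite rHE add0r.
- by rewrite rHH !mulr0 !mul0r !scale0r.
- by rewrite rHF add0r -scaleNr.
Qed.

Lemma act_L0 M u a : L0 u = a *: u -> L0 (act M u) = (a + (deg M)%:~R) *: act M u.
Proof.
move=> hu; elim: M => [|l M IH] /=; first by rewrite /deg big_nil addr0.
rewrite L0_op IH linearZ /= -scalerBl /deg big_cons intrD intrN; congr (_ *: _).
by rewrite /deg; ring.
Qed.

Lemma act_H0 M u b : H 0 u = b *: u -> H 0 (act M u) = (b + (wt M)%:~R) *: act M u.
Proof.
move=> hu; elim: M => [|l M IH] /=; first by rewrite /wt big_nil addr0.
rewrite H0_op IH linearZ /= -scalerDl /wt big_cons intrD; congr (_ *: _).
by rewrite /wt; ring.
Qed.

Lemma act_cat M1 M2 u : act (M1 ++ M2) u = act M1 (act M2 u).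
Proof. by rewrite /act foldr_cat. Qed.

Lemma act_nseq j l u : act (nseq j l) u = iter j (op l) u.
Proof. by elim: j => //= j ->. Qed.

Lemma itZ (f : {linear V -> V}) n c x : iter n f (c *: x) = c *: iter n f x.
Proof. by elim: n => //= n ->; rewrite linearZ. Qed.
Lemma itD (f : {linear V -> V}) n x y : iter n f (x + y) = iter n f x + iter n f y.
Proof. by elim: n => //= n ->; rewrite linearD. Qed.
Lemma it0 (f : {linear V -> V}) n : iter n f 0 = 0.
Proof. by elim: n => //= n ->; rewrite linear0. Qed.
Lemma itB (f : {linear V -> V}) n x y : iter n f (x - y) = iter n f x - iter n f y.
Proof. by rewrite itD -scaleN1r itZ scaleN1r. Qed.
Lemma it_sum (f : {linear V -> V}) n (I : Type) (r : seq I) (P : pred I) (g : I -> V) :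
  iter n f (\sum_(i <- r | P i) g i) = \sum_(i <- r | P i) iter n f (g i).
Proof.
elim: r => [|i r IH]; first by rewrite !big_nil it0.
by rewrite !big_cons; case: (P i); rewrite ?itD IH.
Qed.
Lemma iter_comm (f g : V -> V) n x : (forall y, f (g y) = g (f y)) ->
  iter n f (g x) = g (iter n f x).
Proof. by move=> fg; elim: n => //= n ->. Qed.

Definition S (u : V) (x : V) : Prop :=
  exists s : seq (F * seq letter), x = \sum_(p <- s | all allowed p.2) p.1 *: act p.2 u.

Lemma S0 u : S u 0.
Proof. by exists [::]; rewrite big_nil. Qed.
Lemma SD u x y : S u x -> S u y -> S u (x + y).
Proof. by move=> [s1 ->] [s2 ->]; exists (s1 ++ s2); rewrite big_cat. Qed.
Lemma SZ u c x : S u x -> S u (c *: x).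
Proof.
move=> [s ->]; exists (map (fun p => (c * p.1, p.2)) s).
rewrite big_map scaler_sumr; apply: eq_bigr => p _ /=; by rewrite scalerA.
Qed.
Lemma Sword u M : all allowed M -> S u (act M u).
Proof. by move=> hM; exists [:: (1, M)]; rewrite big_cons big_nil /= hM scale1r addr0. Qed.
Lemma Ssum u (I : Type) (r : seq I) (P : pred I) (g : I -> V) :
  (forall i, P i -> S u (g i)) -> S u (\sum_(i <- r | P i) g i).
Proof.
move=> h; elim: r => [|i r IH]; first by rewrite big_nil; apply: S0.
rewrite big_cons; case hP: (P i) => //; exact: SD (h _ hP) IH.
Qed.
Lemma Sop_allowed u l x : allowed l -> S u x -> S u (op l x).
Proof.
move=> hl [s ->]; exists (map (fun p => (p.1, l :: p.2)) s).
rewrite big_map linear_sum; apply: eq_big => p /=; first by rewrite hl.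
by move=> _; rewrite linearZ.
Qed.

Lemma comm_op l l' w : exists l'' c1 c2,
  op l (op l' w) = op l' (op l w) + c1 *: op l'' w + c2 *: w.
Proof.
case: l => [[] m]; case: l' => [[] n]; rewrite /op /=.
- by exists (KE, n), 0, 0; rewrite rEE !scale0r !addr0.
- by exists (KE, n + m), (-2), 0; rewrite rEH scale0r addr0 scaleNr.
- by exists (KH, m + n), 1, (m%:~R * delta0 F m n * k%:R); rewrite rEF scale1r addrA.
- by exists (KE, m + n), 2%:R, 0; rewrite rHE scale0r addr0.
- by exists (KE, n), 0, (2 * m%:~R * delta0 F m n * k%:R); rewrite rHH scale0r addr0.
- by exists (KF, m + n), (-2), 0; rewrite rHF scale0r addr0 scaleNr.
- exists (KH, n + m), (-1), (- (n%:~R * delta0 F n m * k%:R)).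
  by rewrite rFE opprD addrA scaleN1r scaleNr.
- by exists (KF, n + m), 2%:R, 0; rewrite rFH scale0r addr0.
- by exists (KF, n), 0, 0; rewrite rFF !scale0r !addr0.
Qed.

Definition singular (u : V) := forall l, ~~ allowed l -> op l u = 0.

Lemma Sclosed u : singular u -> forall M, all allowed M -> forall l, S u (op l (act M u)).
Proof.
move=> su; elim=> [|l' M IH] /=.
  move=> _ l; case hl: (allowed l); first by apply: (@Sword u [:: l]); rewrite /= hl.
  by rewrite su ?hl //; apply: S0.
move=> /andP[hl' hM] l; case hl: (allowed l).
  by apply: (@Sword u [:: l, l' & M]) => /=; rewrite hl hl' hM.
have [l'' [c1 [c2 ->]]] := comm_op l l' (act M u).
apply: SD; [apply: SD|]; last by apply: SZ; apply: Sword.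
  by apply: Sop_allowed => //; apply: IH.
by apply: SZ; apply: IH.
Qed.

Lemma Sop u : singular u -> forall l x, S u x -> S u (op l x).
Proof.
move=> su l x [s ->]; rewrite linear_sum; apply: Ssum => p hp.
by rewrite linearZ; apply: SZ; apply: Sclosed.
Qed.

Lemma S_all u : singular u -> u != 0 -> forall y, S u y.
Proof.
move=> su u0; case: HL => _ hs _ _ _; apply: hs.
  split; [exact: S0 | exact: SD | exact: SZ |].
  by move=> n x hx; split; [exact: (Sop su (KE, n) hx) | exact: (Sop su (KH, n) hx) | exact: (Sop su (KF, n) hx)].
by exists u => //; apply: (@Sword u [::]).
Qed.


Lemma eig_zero (T : {linear V -> V}) (al : F) (I : Type) (r : seq I) :
  forall (P : pred I) (e : I -> F) (f : I -> V),
  (forall i, P i -> T (f i) = e i *: f i) -> (forall i, P i -> e i != al) ->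
  T (\sum_(i <- r | P i) f i) = al *: \sum_(i <- r | P i) f i ->
  \sum_(i <- r | P i) f i = 0.
Proof.
elim: r => [|i r IH] P e f hT hne; first by rewrite big_nil.
rewrite big_cons; case hP: (P i); last exact: (IH P e f hT hne).
set y' := \sum_(j <- r | P j) f j; set y := _ + _ => hy.
pose g j := (e j - e i) *: f j.
have Ty' : T y' = al *: y - e i *: f i.
  rewrite -hy /y linearD (hT i hP).
  by rewrite addrC addKr.
have hg : \sum_(j <- r | P j) g j = (al - e i) *: y.
  rewrite /g (eq_bigr (fun j => e j *: f j - e i *: f j)); last by move=> j _; rewrite scalerBl.
  rewrite sumrB -scaler_sumr -/y' -(eq_bigr _ (fun j hj => hT j hj)) -linear_sum -/y' Ty'.
  by rewrite /y scalerBl [e i *: (_ + _)]scalerDr opprD addrA.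
have : \sum_(j <- r | P j) g j = 0.
  apply: (IH P e g) => //.
    by move=> j hj; rewrite /g linearZ /= hT // !scalerA mulrC.
  by rewrite hg linearZ /= hy !scalerA mulrC.
rewrite hg => /eqP; rewrite scaler_eq0 subr_eq0 eq_sym (negbTE (hne i hP)) /=.
by move/eqP.
Qed.

Lemma eig_group (T : {linear V -> V}) (al : F) (I : Type) (r : seq I)
  (P : pred I) (e : I -> F) (f : I -> V) :
  (forall i, P i -> T (f i) = e i *: f i) ->
  T (\sum_(i <- r | P i) f i) = al *: \sum_(i <- r | P i) f i ->
  \sum_(i <- r | P i) f i = \sum_(i <- r | P i && (e i == al)) f i.
Proof.
move=> hT hy; rewrite (bigID (fun i => e i == al)) /=.
have Tg : T (\sum_(i <- r | P i && (e i == al)) f i) = al *: \sum_(i <- r | P i && (e i == al)) f i.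
  rewrite linear_sum scaler_sumr; apply: eq_bigr => i /andP[hP /eqP <-]; exact: hT.
suff -> : \sum_(i <- r | P i && ~~ (e i == al)) f i = 0 by rewrite addr0.
apply: (@eig_zero T al I r (fun i => P i && ~~ (e i == al)) e f).
- by move=> i /andP[hP _]; apply: hT.
- by move=> i /andP[_ ?].
have -> : \sum_(i <- r | P i && ~~ (e i == al)) f i =
   \sum_(i <- r | P i) f i - \sum_(i <- r | P i && (e i == al)) f i.
  by rewrite [X in X - _](bigID (fun i => e i == al)) /= [X in X - _]addrC addrK.
by rewrite linearB /= hy Tg scalerBr.
Qed.

Lemma deg_cons l M : deg (l :: M) = - l.2 + deg M.
Proof. by rewrite /deg big_cons. Qed.
Lemma wt_cons l M : wt (l :: M) = wtk l.1 + wt M.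
Proof. by rewrite /wt big_cons. Qed.

Lemma allowed_le l : allowed l -> l.2 <= 0.
Proof. by case: l => [[] n]; rewrite /allowed //= => /ltW. Qed.

Lemma deg_wt M : all allowed M -> 0 <= deg M /\ (deg M = 0 -> wt M <= 0).
Proof.
elim: M => [|[c n] M IH] /=; first by rewrite /deg /wt !big_nil.
move=> /andP[hl /IH [h1 h2]]; rewrite deg_cons wt_cons /=.
have hn : n <= 0 := allowed_le hl.
split; first by lia.
move=> h0; have hd : deg M = 0 by lia.
have := h2 hd; move: hl; rewrite /allowed /=; case: c => /=; lia.
Qed.

Lemma deg_wt0 M u b : all allowed M -> deg M = 0 -> wt M = 0 -> H 0 u = b *: u ->
  exists c, act M u = c *: u.
Proof.
move=> + + + hu; elim: M => [|[c n] M IH] /=; first by exists 1; rewrite scale1r.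
move=> /andP[hl hM]; rewrite deg_cons wt_cons /= => hd hwt.
have [d1 d2] := deg_wt hM.
have hn : n <= 0 := allowed_le hl.
have hn0 : n = 0 by lia.
have hdM : deg M = 0 by lia.
have w2 := d2 hdM.
have hwM : wt M = 0 by clear IH; move: hl hwt w2; rewrite /allowed /= hn0; case: c => /=; lia.
have [c0 ->] := IH hM hdM hwM.
clear IH; move: hl hwt; rewrite /allowed /= hn0 hwM; case: c => //= _ _.
by exists (c0 * b); rewrite /op /= linearZ /= hu scalerA.
Qed.


Section Group.
Variables (u : V) (s : seq (F * seq letter)).
Local Notation tm p := (p.1 *: act p.2 u).

Lemma S_groupL a d (P : pred (F * seq letter)) : L0 u = a *: u ->
  L0 (\sum_(p <- s | P p) tm p) = (a + d%:~R) *: \sum_(p <- s | P p) tm p ->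
  \sum_(p <- s | P p) tm p = \sum_(p <- s | P p && (deg p.2 == d)) tm p.
Proof.
move=> hu hy; rewrite (@eig_group L0 (a + d%:~R) _ s P (fun p => a + (deg p.2)%:~R) (fun p => tm p)) //.
  by apply: eq_bigl => p; rewrite (inj_eq (addrI a)) eqr_int.
by move=> p _; rewrite linearZ /= (act_L0 _ hu) !scalerA mulrC.
Qed.

Lemma S_groupH b w (P : pred (F * seq letter)) : H 0 u = b *: u ->
  H 0 (\sum_(p <- s | P p) tm p) = (b + w%:~R) *: \sum_(p <- s | P p) tm p ->
  \sum_(p <- s | P p) tm p = \sum_(p <- s | P p && (wt p.2 == w)) tm p.
Proof.
move=> hu hy; rewrite (@eig_group (H 0) (b + w%:~R) _ s P (fun p => b + (wt p.2)%:~R) (fun p => tm p)) //.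
  by apply: eq_bigl => p; rewrite (inj_eq (addrI b)) eqr_int.
by move=> p _; rewrite linearZ /= (act_H0 _ hu) !scalerA mulrC.
Qed.
End Group.

Lemma hv_props : [/\ v != 0, (forall n : int, 0 < n -> [/\ E n v = 0, H n v = 0 & Fo n v = 0]),
          E 0 v = 0, H 0 v = lam%:R *: v & L0 v = hwF *: v].
Proof. by case: HL => _ _ [? ? ? ?] _ ?. Qed.

Lemma sing_v : singular v.
Proof.
have [_ hpos he0 _ _] := hv_props.
case=> [[] n]; rewrite /allowed /=.
- rewrite -leNgt le_eqVlt => /orP[/eqP <-|hn] //; by case: (hpos n hn).
- by rewrite -ltNge => hn; case: (hpos n hn).
- by rewrite -ltNge => hn; case: (hpos n hn).
Qed.

Lemma NEG y (d : int) : L0 y = (hwF + d%:~R) *: y -> d < 0 -> y = 0.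
Proof.
move=> hy hd; have [v0 _ _ _ hL] := hv_props.
have [s ys] := S_all sing_v v0 y.
rewrite ys (S_groupL (d := d) hL); last by rewrite -ys.
rewrite big_pred0 // => p; apply/negbTE; apply/andP => -[/deg_wt [h1 _] /eqP h2].
by move: h1 hd; rewrite h2; lia.
Qed.

Lemma SL u (d mu : int) : 0 <= d -> (0 < d \/ mu < lam%:Z) ->
  L0 u = (hwF + d%:~R) *: u -> H 0 u = mu%:~R *: u -> singular u -> u = 0.
Proof.
move=> hd hdm hL hH su; apply/eqP; apply: contraT => u0.
have [v0 _ _ hHv hLv] := hv_props.
have [s vs] := S_all su u0 v.
have e1 : L0 v = (hwF + d%:~R + (- d)%:~R) *: v by rewrite hLv intrN addrK.
have e2 : H 0 v = (mu%:~R + (lam%:Z - mu)%:~R) *: v.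
  by rewrite hHv intrB addrC subrK.
move: v0; rewrite vs (S_groupL (d := - d) hL) -?vs //.
rewrite (S_groupH (w := lam%:Z - mu) hH); last by rewrite -(S_groupL (d := - d) hL) -?vs.
rewrite big_pred0 ?eqxx // => p; apply/negbTE; apply/andP => -[/andP[/deg_wt [h1 h2] /eqP h3] /eqP h4].
have hd0 : d = 0 by lia.
have := h2 ltac:(lia); lia.
Qed.

Lemma top_wt y : L0 y = hwF *: y -> H 0 y = lam%:R *: y -> exists c, y = c *: v.
Proof.
move=> hy hyH; have [v0 _ _ hHv hLv] := hv_props.
have [s ys] := S_all sing_v v0 y.
have e1 : L0 y = (hwF + (0:int)%:~R) *: y by rewrite addr0.
have e2 : H 0 y = (lam%:R + (0:int)%:~R) *: y by rewrite addr0.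
rewrite ys (S_groupL (d := 0) hLv) -?ys //.
rewrite (S_groupH (w := 0) hHv); last by rewrite -(S_groupL (d := 0) hLv) -?ys.
elim: s {ys} => [|p s [c hc]]; first by exists 0; rewrite big_nil scale0r.
rewrite big_cons hc; case: ifP => [/andP[/andP[hM /eqP hd] /eqP hw]|_]; last by exists c.
have [c' ->] := deg_wt0 hM hd hw hHv.
by exists (p.1 * c' + c); rewrite scalerA scalerDl.
Qed.


Lemma L0X (X : int -> {linear V -> V}) : (X = E \/ X = H \/ X = Fo) ->
  forall u (d n : int), L0 u = (hwF + d%:~R) *: u -> L0 (X n u) = (hwF + (d - n)%:~R) *: X n u.
Proof.
by move=> hX u d n hu; rewrite (rL0 hX) hu linearZ -scalerBl intrB addrA.
Qed.
Lemma H0E u (mu n : int) : H 0 u = mu%:~R *: u -> H 0 (E n u) = (mu + 2)%:~R *: E n u.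
Proof. by move=> hu; rewrite rHE add0r hu linearZ -scalerDl intrD. Qed.
Lemma H0H u (mu n : int) : H 0 u = mu%:~R *: u -> H 0 (H n u) = mu%:~R *: H n u.
Proof. by move=> hu; rewrite rHH !mulr0 !mul0r scale0r addr0 hu linearZ. Qed.
Lemma H0F u (mu n : int) : H 0 u = mu%:~R *: u -> H 0 (Fo n u) = (mu - 2)%:~R *: Fo n u.
Proof. by move=> hu; rewrite rHF add0r hu linearZ -scalerBl intrB. Qed.

Definition Qstmt (d : int) := forall u (mu : int), L0 u = (hwF + d%:~R) *: u ->
  H 0 u = mu%:~R *: u -> E 0 u = 0 -> mu < lam%:Z - 2 * d -> u = 0.

Lemma kill_HF (d : int) u (mu : int) : (forall d', d' < d -> Qstmt d') ->
  L0 u = (hwF + d%:~R) *: u -> H 0 u = mu%:~R *: u -> E 0 u = 0 ->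
  (forall n : int, 0 < n -> E n u = 0) -> mu < lam%:Z - 2 * d + 2 -> singular u.
Proof.
move=> IH hL hH hE hEn hmu.
have hHn : forall n : int, 0 < n -> H n u = 0.
  move=> n hn; apply: (IH (d - n) _ _ mu); first by lia.
  - by apply: L0X; [right; left|].
  - by apply: H0H.
  - by rewrite rEH hE linear0 addr0 hEn ?scaler0 ?subr0 //.
  - by lia.
case=> [[] n]; rewrite /allowed /=.
- by rewrite -leNgt le_eqVlt => /orP[/eqP <-|hn] //; apply: hEn.
- by rewrite -ltNge => hn; apply: hHn.
rewrite -ltNge => hn; apply: (IH (d - n) _ _ (mu - 2)); first by lia.
- by apply: L0X; [right; right|].
- by apply: H0F.
- by rewrite rEF hE linear0 add0r add0r hHn // mul0r mul0r scale0r addr0.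
- by lia.
Qed.

Lemma Qall : forall d, Qstmt d.
Proof.
suff : forall N : nat, forall d : int, d < N%:Z -> Qstmt d.
  by move=> h d; case: d => [n|n]; [apply: (h n.+1) | apply: (h 0%N)]; lia.
elim=> [|N IH] d hd u mu hL hH hE hmu.
  by apply: (NEG hL); lia.
have [dneg|dpos] := ltP d 0; first exact: (NEG hL).
have hEn : forall n : int, 0 < n -> E n u = 0.
  move=> n hn; apply: (IH (d - n) _ _ (mu + 2)); first by lia.
  - by apply: L0X; [left|].
  - by apply: H0E.
  - by rewrite rEE hE linear0.
  - by lia.
have su : singular u.
  apply: (@kill_HF d u mu) => //; last by lia.
  by move=> d' hd'; apply: IH; lia.
by apply: (SL (d := d) (mu := mu)) => //; lia.
Qed.

Lemma Bnd : forall (dn : nat) u, L0 u = (hwF + (dn%:Z)%:~R) *: u ->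
  H 0 u = (lam%:Z - 2 * dn%:Z)%:~R *: u -> E 0 u = 0 -> iter dn (E 1) u = 0 -> u = 0.
Proof.
elim=> [|dn IH] u hL hH hE hit; first by [].
have hE1 : E 1 u = 0.
  apply: IH.
  - by rewrite (L0X (or_introl erefl) 1 hL); congr ((_ + _%:~R) *: _); lia.
  - by rewrite (H0E 1 hH); congr (_%:~R *: _); lia.
  - by rewrite rEE hE linear0.
  - by rewrite -iterSr.
have hEn : forall n : int, 0 < n -> E n u = 0.
  move=> n hn; have [->|n1] := eqVneq n 1; first exact: hE1.
  apply: (Qall _ (mu := lam%:Z - 2 * dn%:Z)).
  - exact: (L0X (or_introl erefl) n hL).
  - by rewrite (H0E n hH); congr (_%:~R *: _); lia.
  - by rewrite rEE hE linear0.
  - by move/eqP: n1 => n1; lia.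
have su : singular u.
  apply: (@kill_HF dn.+1%:Z u (lam%:Z - 2 * dn.+1%:Z)) => //; last by lia.
  by move=> d' _; apply: Qall.
by apply: (SL (d := dn.+1%:Z) (mu := lam%:Z - 2 * dn.+1%:Z)) => //; lia.
Qed.


Lemma delta_n0 (n : int) : n != 0 -> delta0 F n 0 = 0.
Proof. by rewrite /delta0 addr0 => /negbTE ->. Qed.

Lemma top_pos i (n : int) : 0 < n ->
  [/\ E n (iter i (Fo 0) v) = 0, H n (iter i (Fo 0) v) = 0 & Fo n (iter i (Fo 0) v) = 0].
Proof.
move=> hn; have [_ hpos _ _ _] := hv_props.
have n0 : n != 0 by rewrite gt_eqF.
elim: i => [|i [h1 h2 h3]] /=; first exact: hpos.
split.
- by rewrite rEF h1 linear0 addr0 h2 delta_n0 // mulr0 mul0r scale0r addr0 add0r.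
- by rewrite rHF h2 addr0 h3 linear0 scaler0 subr0.
- by rewrite rFF h3 linear0.
Qed.

Lemma H0iterF u (mu : int) j : H 0 u = mu%:~R *: u ->
  H 0 (iter j (Fo 0) u) = (mu - 2 * j%:Z)%:~R *: iter j (Fo 0) u.
Proof.
move=> hu; elim: j => [|j IH] /=; first by rewrite mulr0 subr0.
by rewrite (H0F _ IH); congr (_%:~R *: _); lia.
Qed.

Lemma H0iterE u (mu n : int) j : H 0 u = mu%:~R *: u ->
  H 0 (iter j (E n) u) = (mu + 2 * j%:Z)%:~R *: iter j (E n) u.
Proof.
move=> hu; elim: j => [|j IH] /=; first by rewrite mulr0 addr0.
by rewrite (H0E _ IH); congr (_%:~R *: _); lia.
Qed.

Lemma L0iter (X : int -> {linear V -> V}) : (X = E \/ X = H \/ X = Fo) ->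
  forall u (d n : int) j, L0 u = (hwF + d%:~R) *: u ->
  L0 (iter j (X n) u) = (hwF + (d - j%:Z * n)%:~R) *: iter j (X n) u.
Proof.
move=> hX u d n j hu; elim: j => [|j IH] /=; first by rewrite mul0r subr0.
by rewrite (L0X hX _ IH); congr ((_ + _%:~R) *: _); lia.
Qed.

Lemma e0f0 z (mu : int) j : H 0 z = mu%:~R *: z ->
  E 0 (iter j.+1 (Fo 0) z) = iter j.+1 (Fo 0) (E 0 z) + ((j.+1)%:R * (mu%:~R - j%:R)) *: iter j (Fo 0) z.
Proof.
move=> hz; elim: j => [|j IH].
  by rewrite /= rEF add0r hz !mul0r scale0r addr0 mul1r subr0.
rewrite [iter j.+2 _ _]/= rEF IH linearD linearZ /= add0r mul0r mul0r scale0r addr0.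
rewrite (H0iterF j.+1 hz) -addrA -scalerDl; congr (_ + _ *: _).
rewrite intrB intrM /=; rewrite -!natr1; ring.
Qed.


Lemma e0_top j : (j <= lam)%N -> iter j (E 0) (iter lam (Fo 0) v) =
  (lam ^_ j * j`!)%:R *: iter (lam - j) (Fo 0) v.
Proof.
have [_ _ he0 hHv _] := hv_props.
have hv : H 0 v = (lam%:Z)%:~R *: v by rewrite hHv.
elim: j => [|j IH] hj; first by rewrite subn0 ffactn0 fact0 scale1r.
rewrite iterS IH ?(ltnW hj) // linearZ /=.
have -> : (lam - j = (lam - j.+1).+1)%N by lia.
rewrite (e0f0 _ hv) he0 it0 add0r scalerA; congr (_ *: _).
have -> : lam = ((lam - j.+1) + j.+1)%N by lia.
rewrite addnK ffactnSr factS !natrM.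
have -> : ((lam - j.+1 + j.+1) - j = (lam - j.+1).+1)%N by lia.
rewrite /intmul natrD; ring.
Qed.

Lemma e0_top_over : iter lam.+1 (E 0) (iter lam (Fo 0) v) = 0.
Proof.
have [_ _ he0 _ _] := hv_props.
by rewrite iterS e0_top // subnn linearZ /= he0 scaler0.
Qed.

Lemma f1em1 Y (mu : int) n : Fo 1 Y = 0 -> H 0 Y = mu%:~R *: Y ->
  Fo 1 (iter n.+1 (E (-1)) Y) = ((n.+1)%:R * (k%:R - mu%:~R - n%:R)) *: iter n (E (-1)) Y.
Proof.
move=> hF hH; have d1 : delta0 F (-1) 1 = 1 by rewrite /delta0.
elim: n => [|n IH].
  rewrite /= rFE hF linear0 add0r d1 hH mulr1 -scalerDl -scaleNr.
  congr (_ *: _); rewrite mul1r subr0 /=; ring.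
rewrite [iter n.+2 _ _]/= rFE IH linearZ /= d1.
have -> : (-1 + 1 : int) = 0 by [].
rewrite -[E (-1) (iter n (E (-1)) Y)]/(iter n.+1 (E (-1)) Y).
rewrite (H0iterE _ _ hH) mulr1 -scalerDl -scalerBl.
congr (_ *: _); rewrite intrD intrM /= -!natr1; ring.
Qed.

Lemma f1m Y (mu : int) n : Fo 1 Y = 0 -> H 0 Y = mu%:~R *: Y ->
  iter n (Fo 1) (iter n (E (-1)) Y) =
  (\prod_(i < n) ((i.+1)%:R * (k%:R - mu%:~R - i%:R))) *: Y.
Proof.
move=> hF hH; elim: n => [|n IH]; first by rewrite big_ord0 scale1r.
rewrite iterSr (f1em1 _ hF hH) itZ IH scalerA big_ord_recr /= mulrC.
by [].
Qed.


Definition cj (j : nat) : F := (-1) ^+ j / (j`! * j.+1`!)%:R.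
Definition pmu m (mu : int) : F := \prod_(i < m) ((i.+1)%:R * (k%:R - mu%:~R - i%:R)).

Lemma prod_fact n : \prod_(i < n) ((i.+1)%:R : F) = n`!%:R.
Proof.
elim: n => [|n IH]; first by rewrite big_ord0 fact0.
by rewrite big_ord_recr /= IH factS natrM mulrC.
Qed.

Lemma size_prod_lin n (a b : nat -> F) :
  (size (\prod_(i < n) ((a i)%:P * 'X + (b i)%:P))%R <= n.+1)%N.
Proof.
elim: n => [|n IH]; first by rewrite big_ord0 size_polyC; case: (_ != _).
rewrite big_ord_recr /=; apply: leq_trans (size_polyMleq _ _) _.
have h2 : (size ((a n)%:P * 'X + (b n)%:P)%R <= 2)%N.
  rewrite size_MXaddC; case: ifP => // _; rewrite ltnS; exact: size_polyC_leq1.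
rewrite -subn1; apply: leq_trans (leq_sub2r 1 (leq_add IH h2)) _.
by rewrite addn2 subn1.
Qed.

Lemma fact_neq0 n : (n`!%:R : F) != 0.
Proof. by rewrite pnatr_eq0 -lt0n fact_gt0. Qed.

Lemma Sc_neq0 m : lam = (m + m)%N ->
  \sum_(0 <= j < lam.+1) cj j * ((lam ^_ j * j`!)%:R * pmu m (lam%:Z - 2 * (lam - j)%N%:Z)) != 0.
Proof.
move=> hlm.
pose qp := \prod_(i < m) ((-2 : F)%:P * 'X + ((k + lam + 2 - i)%N%:R)%:P).
have hq j : (j <= lam)%N -> pmu m (lam%:Z - 2 * (lam - j)%N%:Z) = m`!%:R * qp.[(j.+1)%:R].
  move=> hj; rewrite /pmu horner_prod big_split /= prod_fact; congr (_ * _).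
  apply: eq_bigr => i _; rewrite !hornerE.
  have hi : (i < m)%N by [].
  rewrite natrB; last by lia.
  rewrite intrB intrM /intmul natrB // !natrD -!natr1 /=; ring.
have hc j : (j <= lam)%N -> (lam.+1)%:R * (cj j * (lam ^_ j * j`!)%:R) = (-1) ^+ j * 'C(lam.+1, j.+1)%:R.
  move=> hj.
  have hC : ('C(lam.+1, j.+1)%:R : F) = lam.+1%:R * (lam ^_ j)%:R / (j.+1)`!%:R.
    by rewrite -natrM -ffactSS -bin_ffact natrM mulfK // fact_neq0.
  rewrite hC /cj natrM natrM factS natrM.
  have h1 := fact_neq0 j; have h2 : (j.+1%:R : F) != 0 by rewrite pnatr_eq0.
  by field; rewrite h1 addrC natr1 h2.
have hsum : (lam.+1)%:R * \sum_(0 <= j < lam.+1) cj j * ((lam ^_ j * j`!)%:R * pmu m (lam%:Z - 2 * (lam - j)%N%:Z))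
    = m`!%:R * \sum_(j < lam.+1) (-1) ^+ j * 'C(lam.+1, j.+1)%:R * qp.[(j.+1)%:R].
  rewrite big_mkord !mulr_sumr; apply: eq_bigr => j _.
  have hj : (j <= lam)%N by rewrite -ltnS.
  rewrite hq //.
  transitivity ((lam.+1%:R * (cj j * (lam ^_ j * j`!)%:R)) * (m`!%:R * qp.[j.+1%:R])); first by ring.
  by rewrite hc //; ring.
have hsz : (size qp <= lam.+1)%N.
  apply: leq_trans (size_prod_lin m (fun _ => -2) (fun i => (k + lam + 2 - i)%N%:R)) _; lia.
have hFD := FDp hsz.
have : (lam.+1 <= lam.+1)%N by [].
move: hFD; rewrite big_ord_recl /= expr0 mul1r bin0 mul1r => hFD _.
have h' : \sum_(j < lam.+1) (-1) ^+ (bump 0 j) * 'C(lam.+1, bump 0 j)%:R * qp.[(bump 0 j)%:R]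
    = - \sum_(j < lam.+1) (-1) ^+ j * 'C(lam.+1, j.+1)%:R * qp.[(j.+1)%:R].
  by rewrite -sumrN; apply: eq_bigr => j _; rewrite /bump /= add1n exprS; ring.
rewrite h' in hFD.
have hs := subr0_eq hFD.
have hq0 : qp.[0%:R] != 0.
  rewrite horner_prod prodf_seq_neq0; apply/allP => i _ /=.
  rewrite !hornerE pnatr_eq0; have := ltn_ord i; lia.
have hm : (m`!%:R : F) != 0 := fact_neq0 m.
apply/negP => /eqP h0.
move: hsum; rewrite h0 mulr0 -hs => /esym /eqP; rewrite mulf_eq0 (negbTE hm) (negbTE hq0).
by [].
Qed.



Lemma iter_comm2 (f g : V -> V) a b x : (forall y, f (g y) = g (f y)) ->
  iter a f (iter b g x) = iter b g (iter a f x).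
Proof. by move=> fg; elim: b => //= b <-; apply: iter_comm. Qed.

Lemma cj_rec j : cj j.+1 * ((j.+1)%:R * ((2 * j.+1%:Z)%:~R - j%:R)) = - cj j.
Proof.
rewrite /cj !factS !natrM exprS.
have h1 := fact_neq0 j; have h2 : (j.+1%:R : F) != 0 by rewrite pnatr_eq0.
have h3 : (j.+2%:R : F) != 0 by rewrite pnatr_eq0.
rewrite intrM /= -!natr1; rewrite -!natr1 in h2 h3.
field; rewrite h1 h2 /=.
move: h3; rewrite -addrA.
by move=> ->.
Qed.

Lemma exist_inv m : lam = (m + m)%N -> exists2 u, u != 0 &
   [/\ L0 u = (hwF + (m%:Z)%:~R) *: u, E 0 u = 0, H 0 u = 0 & Fo 0 u = 0].
Proof.
move=> hlm.
have [v0 _ he0 hHv hLv] := hv_props.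
pose Y0 := iter lam (Fo 0) v.
pose y0 := iter m (E (-1)) Y0.
pose z j := iter j (E 0) y0.
pose u := \sum_(j < lam.+1) cj j *: iter j (Fo 0) (z j).
have hv : H 0 v = (lam%:Z)%:~R *: v by rewrite hHv.
have hLv' : L0 v = (hwF + (0:int)%:~R) *: v by rewrite addr0.
have hzH j : H 0 (z j) = (2 * j%:Z)%:~R *: z j.
  rewrite /z (H0iterE 0 j (H0iterE (-1) m (H0iterF lam hv))); congr (_%:~R *: _); lia.
have hTL j : L0 (iter j (Fo 0) (z j)) = (hwF + (m%:Z)%:~R) *: iter j (Fo 0) (z j).
  have hF : Fo = E \/ Fo = H \/ Fo = Fo by right; right.
  have hE : E = E \/ E = H \/ E = Fo by left.
  rewrite /z (L0iter hF 0 j (L0iter hE 0 j (L0iter hE (-1) m (L0iter hF 0 lam hLv')))).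
  congr ((_ + _%:~R) *: _); lia.
have hTH j : H 0 (iter j (Fo 0) (z j)) = 0.
  by rewrite (H0iterF j (hzH j)) -[X in X%:~R](_ : 0 = _) ?scale0r //; lia.
have hL : L0 u = (hwF + (m%:Z)%:~R) *: u.
  rewrite linear_sum scaler_sumr; apply: eq_bigr => j _.
  by rewrite linearZ /= hTL !scalerA mulrC.
have hH : H 0 u = 0.
  by rewrite linear_sum big1 // => j _; rewrite linearZ /= hTH scaler0.
pose Tt j := if j is j'.+1 then cj j' *: iter j' (Fo 0) (z j'.+1) else 0.
have he j : E 0 (cj j *: iter j (Fo 0) (z j)) = Tt j.+1 - Tt j.
  case: j => [|j]; first by rewrite /= subr0 linearZ.
  rewrite linearZ /= (e0f0 j (hzH j.+1)) scalerDr scalerA cj_rec scaleNr.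
  by [].
have hE : E 0 u = 0.
  rewrite /u -(big_mkord xpredT (fun j => cj j *: iter j (Fo 0) (z j))) linear_sum.
  rewrite (eq_bigr _ (fun j _ => he j)).
  rewrite telescope_sumr // /= subr0 /z.
  rewrite -[E 0 (iter lam (E 0) y0)]/(iter lam.+1 (E 0) (iter m (E (-1)) Y0)).
  rewrite (@iter_comm2 (E 0) (E (-1)) lam.+1 m Y0); last by move=> y; rewrite rEE.
  by rewrite e0_top_over it0 it0 scaler0.
have hF : Fo 0 u = 0.
  apply: (Qall (d := m%:Z) (mu := -2)).
  - by rewrite (L0X _ _ hL) ?subr0 //; right; right.
  - by rewrite (H0F 0 (mu := 0)) ?hH ?scale0r.
  - by rewrite rEF hE linear0 add0r hH !mul0r scale0r addr0.
  - lia.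
exists u; last by [].
pose Sc := \sum_(j < lam.+1) cj j * ((lam ^_ j * j`!)%:R * pmu m (lam%:Z - 2 * (lam - j)%N%:Z)).
have key : iter m (Fo 1) u = Sc *: Y0.
  rewrite /u it_sum scaler_suml; apply: eq_bigr => j _.
  have hj : (j <= lam)%N by rewrite -ltnS.
  rewrite itZ (@iter_comm2 (Fo 1) (Fo 0) m j); last by move=> y; rewrite rFF.
  rewrite /z /y0 (@iter_comm2 (E 0) (E (-1)) j m Y0); last by move=> y; rewrite rEE.
  rewrite e0_top // !itZ.
  have [_ _ hF1] := top_pos (lam - j) (ltr01 : (0:int) < 1).
  rewrite (f1m m hF1 (H0iterF (lam - j) hv)) !itZ -iterD subnKC // !scalerA.
  by rewrite mulrA.
have Y0nz : Y0 != 0.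
  apply/negP => /eqP Y00; move: (e0_top (leqnn lam)); rewrite -/Y0 Y00 it0 subnn /= => /esym /eqP.
  rewrite scaler_eq0 (negbTE v0) orbF pnatr_eq0 muln_eq0 ffactnn orbb.
  by have := fact_gt0 lam; rewrite lt0n => /negbTE ->.
have Scnz : Sc != 0 by have := Sc_neq0 hlm; rewrite big_mkord.
apply/negP => /eqP u0; move: key; rewrite u0 it0 => /esym /eqP.
by rewrite scaler_eq0 (negbTE Scnz) (negbTE Y0nz).
Qed.


Lemma main_sec : ~~ odd lam ->
  ((2 <= lam)%N -> forall (n : int), n < (lam./2)%:Z ->
     forall w : V, triv_in_weight k lam E H Fo L0 n w -> w = 0)
  /\
  ((exists2 w : V, w != 0 & triv_in_weight k lam E H Fo L0 (lam./2)%:Z w) /\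
   (forall w1 w2 : V, w1 != 0 ->
      triv_in_weight k lam E H Fo L0 (lam./2)%:Z w1 ->
      triv_in_weight k lam E H Fo L0 (lam./2)%:Z w2 ->
      exists c : F, w2 = c *: w1)).
Proof.
move=> ho; set m := lam./2.
have hlm : lam = (m + m)%N.
  by rewrite addnn /m -[in LHS](odd_double_half lam) (negbTE ho) add0n.
split.
  move=> _ n hn w [hL hE hH hF].
  apply: (Qall (d := n) (mu := 0)) => //; first by rewrite hH scale0r.
  move: hn; rewrite -/m; lia.
have hE1 : E = E \/ E = H \/ E = Fo by left.
have hc w : L0 w = (hwF + (m%:Z)%:~R) *: w -> H 0 w = 0 -> exists c, iter m (E 1) w = c *: v.
  move=> hL hH; apply: top_wt.
  - rewrite (L0iter hE1 1 m hL).
    have -> : (m%:Z - m%:Z * 1) = 0 by lia.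
    by rewrite addr0.
  - have hH' : H 0 w = (0:int)%:~R *: w by rewrite hH scale0r.
    rewrite (H0iterE 1 m hH'); congr (_ *: _).
    rewrite -[RHS]/((lam%:Z)%:~R); congr (_%:~R); lia.
split.
  have [u unz [h1 h2 h3 h4]] := exist_inv hlm.
  by exists u => //; split.
move=> w1 w2 w1nz [L1 E1 H1 F1] [L2 E2 H2 F2].
have [c1 hc1] := hc w1 L1 H1.
have [c2 hc2] := hc w2 L2 H2.
have hH0 : forall w, H 0 w = 0 -> H 0 w = (lam%:Z - 2 * m%:Z)%:~R *: w.
  by move=> w ->; rewrite -[X in X%:~R](_ : 0 = _) ?scale0r //; lia.
have c1nz : c1 != 0.
  apply/negP => /eqP c10; move/negP: w1nz; apply; apply/eqP.
  by apply: (Bnd (dn := m)) => //; [apply: hH0 | rewrite hc1 c10 scale0r].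
exists (c2 / c1); apply/eqP; rewrite -subr_eq0; apply/eqP.
apply: (Bnd (dn := m)).
- by rewrite linearB linearZ /= L1 L2 scalerBr !scalerA mulrC.
- by apply: hH0; rewrite linearB linearZ /= H1 H2 scaler0 subr0.
- by rewrite linearB linearZ /= E1 E2 scaler0 subr0.
- by rewrite itB itZ hc1 hc2 scalerA divfK // subrr.
Qed.

End Main.

Unset Implicit Arguments.

Theorem lemma4p3 (F : numClosedFieldType) (V : lmodType F) (k lam : nat)
    (E H Fo : int -> {linear V -> V}) (L0 : {linear V -> V}) (v : V) :
  (lam <= k)%N -> ~~ odd lam ->
  is_L k lam E H Fo L0 v ->
  ((2 <= lam)%N -> forall (n : int), n < (lam./2)%:Z ->
     forall w : V, triv_in_weight k lam E H Fo L0 n w -> w = 0)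
  /\
  ((exists2 w : V, w != 0 & triv_in_weight k lam E H Fo L0 (lam./2)%:Z w) /\
   (forall w1 w2 : V, w1 != 0 ->
      triv_in_weight k lam E H Fo L0 (lam./2)%:Z w1 ->
      triv_in_weight k lam E H Fo L0 (lam./2)%:Z w2 ->
      exists c : F, w2 = c *: w1)).
Proof.
by move=> _ ho HL; apply: (main_sec HL ho).
Qed.
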